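(* Let $D$ be a Hadamard plan of index $n$, let $p$ be a prime with $p\equiv1\pmod n$, and let $F$ be the periodic codebook of length $p$ from $D$. Then for $s\in\mathbb F_p$, \[\sum_{f\in F}P_{f,f}(s)=\begin{cases}(n-1)(p-1)&s=0,\\ 1-n&s\ne0,\end{cases}\] so that $\sum_{s\in\mathbb F_p^*}\left|\sum_{f\in F}P_{f,f}(s)\right|^2=(p-1)(n-1)^2$, $\sum_{s\in\mathbb F_p}\left|\sum_{f\in F}P_{f,f}(s)\right|^2=p(p-1)(n-1)^2$, and $\mathrm{PCDF}(F)=p/(p-1)$.
   Context: For periodic sequences $f,g:\mathbb Z/\ell\mathbb Z\to\mathbb C$ and $s\in\mathbb Z/\ell\mathbb Z$, the periodic crosscorrelation is $P_{f,g}(s)=\sum_{j\in\mathbb Z/\ell\mathbb Z}f_{j+s}\overline{g_j}$. For nonzero $f,g$, $\mathrm{PCDF}(f,g)=\sum_{s}|P_{f,g}(s)|^2/(P_{f,f}(0)P_{g,g}(0))$, and for a finite set $F$ of such sequences of common length, $\mathrm{PCDF}(F)=|F|^{-2}\sum_{f,g\in F}\mathrm{PCDF}(f,g)$. For each prime $p$, $\alpha_p$ is a fixed primitive element of $\mathbb F_p$ and $\mathbb F_p^{*n}$ is the subgroup of $n$th powers. A cyclotomic pattern of index $n$ is $d:\mathbb Z/n\mathbb Z\to\mathbb C$; the periodic sequence of length $p$ from $d$ has $f_0=0$, $f_h=d_k$ for $h\in\alpha_p^k\mathbb F_p^{*n}$. The periodic codebook of length $p$ from a set $D$ of patterns is the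 set of periodic sequences of length $p$ from the patterns in $D$. A Hadamard plan of index $n$ is a set of exactly $n-1$ cyclotomic patterns of index $n$ that are unimodular (entries of modulus $1$), balanced (entries sum to $0$), and pairwise orthogonal in $\mathbb C^n$. *)

(* Defs.v *)
From mathcomp Require Import all_boot all_order all_algebra all_field.
Set Implicit Arguments. Unset Strict Implicit. Unset Printing Implicit Defensive.
Import Order.TTheory GRing.Theory Num.Theory.
Local Open Scope ring_scope.

Definition pseq (p : nat) := {ffun 'F_p -> algC}.

Definition pcorr (p : nat) (f g : pseq p) (s : 'F_p) : algC :=
  \sum_(j : 'F_p) f (j + s) * Num.conj (g j).

Definition PCDF2 (p : nat) (f g : pseq p) : algC :=
  (\sum_(s : 'F_p) `|pcorr f g s| ^+ 2) / (pcorr f f 0 * pcorr g g 0).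

(* PCDF of a finite set F of sequences (given as a duplicate-free list) *)
Definition PCDF (p : nat) (F : seq (pseq p)) : algC :=
  (size F)%:R ^- 2 * \sum_(f <- F) \sum_(g <- F) PCDF2 f g.

Definition pattern (n : nat) := {ffun 'I_n -> algC}.

Definition cyc_class (p n : nat) (alpha : 'F_p) (h : 'F_p) : option 'I_n :=
  [pick k : 'I_n | [exists y : 'F_p, (y != 0) && (h == alpha ^+ k * y ^+ n)]].

Definition seq_of_pattern (p n : nat) (alpha : 'F_p) (d : pattern n) : pseq p :=
  [ffun h : 'F_p => if h == 0 then 0 else
     match cyc_class n alpha h with Some k => d k | None => 0 end].

Definition codebook (p n : nat) (alpha : 'F_p) (D : seq (pattern n)) : seq (pseq p) :=
  undup [seq seq_of_pattern alpha d | d <- D].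

Definition unimodular (n : nat) (d : pattern n) : Prop := forall k, `|d k| = 1.
Definition balanced (n : nat) (d : pattern n) : Prop := \sum_k d k = 0.
Definition orthogonal (n : nat) (d e : pattern n) : Prop :=
  \sum_k d k * Num.conj (e k) = 0.

Definition hadamard_plan (n : nat) (D : seq (pattern n)) : Prop :=
  [/\ uniq D, size D = n.-1,
      (forall d, d \in D -> unimodular d /\ balanced d)
    & (forall d e, d \in D -> e \in D -> d != e -> orthogonal d e)].

(* Main.v *)
Require Import Defs.
From mathcomp Require Import all_boot all_order all_algebra all_field.
From mathcomp Require Import ring.
Import Order.TTheory GRing.Theory Num.Theory.
Set Implicit Arguments. Unset Strict Implicit.
Local Open Scope ring_scope.

Definition dlog p (alpha x : 'F_p) : nat :=
  oapp val 0%N [pick i : 'I_p.-1 | alpha ^+ i == x].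
Definition cls p n (alpha x : 'F_p) : nat := (dlog alpha x %% n)%N.

Lemma fermatF p (x : 'F_p) : prime p -> x != 0 -> x ^+ p.-1 = 1.
Proof.
move=> pp nx; have : x ^+ p.-1.+1 = x.
  by rewrite prednK ?prime_gt0 // -{2}(expf_card x) card_Fp.
by rewrite exprS => /eqP; rewrite -[X in _ == X]mulr1 (inj_eq (mulfI nx)) => /eqP.
Qed.

Lemma dlogK p (alpha x : 'F_p) : prime p -> (p.-1).-primitive_root alpha ->
  x != 0 -> alpha ^+ dlog alpha x = x.
Proof.
move=> pp prim nx; rewrite /dlog; case: pickP => [i /eqP //|none].
have [i Hi] := prim_rootP prim (fermatF pp nx).
by have := none i; rewrite Hi eqxx.
Qed.

Lemma alpha_neq0 p (alpha : 'F_p) : prime p -> (p.-1).-primitive_root alpha -> alpha != 0.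
Proof.
move=> pp prim; apply/eqP => a0; have := prim_expr_order prim.
rewrite a0 expr0n; case: p pp {alpha prim a0} => [|[|p]] //= _.
Qed.

Lemma cls_exp p n (alpha : 'F_p) k : prime p -> (p.-1).-primitive_root alpha ->
  (n %| p.-1)%N -> cls n alpha (alpha ^+ k) = (k %% n)%N.
Proof.
move=> pp prim nd; rewrite /cls.
have := dlogK pp prim (expf_neq0 k (alpha_neq0 pp prim)).
move/eqP; rewrite (eq_prim_root_expr prim) => /eqP H.
by rewrite -(modn_dvdm _ nd) H (modn_dvdm _ nd).
Qed.

Lemma cls_mul p n (alpha x y : 'F_p) : prime p -> (p.-1).-primitive_root alpha ->
  (n %| p.-1)%N -> x != 0 -> y != 0 ->
  cls n alpha (x * y) = ((cls n alpha x + cls n alpha y) %% n)%N.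
Proof.
move=> pp prim nd nx ny.
rewrite -(dlogK pp prim nx) -(dlogK pp prim ny) -exprD cls_exp //.
by rewrite !cls_exp // modnDm.
Qed.

Lemma cyc_classE p n (alpha h : 'F_p) (pp : prime p) (prim : (p.-1).-primitive_root alpha)
  (nd : (n %| p.-1)%N) (n0 : (0 < n)%N) : h != 0 ->
  cyc_class n alpha h = Some (Ordinal (ltn_pmod (dlog alpha h) n0)).
Proof.
move=> nh.
have key : forall k : 'I_n,
    [exists y, (y != 0) && (h == alpha ^+ k * y ^+ n)] = (k == cls n alpha h :> nat).
  move=> k; apply/existsP/eqP.
  - case=> y /andP[ny /eqP ->].
    have a0 := alpha_neq0 pp prim.
    rewrite cls_mul ?expf_neq0 // cls_exp //.
    have -> : cls n alpha (y ^+ n) = 0%N.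
      by rewrite -(dlogK pp prim ny) -exprM cls_exp // modnMl.
    by rewrite addn0 !modn_small.
  - move=> e; exists (alpha ^+ (dlog alpha h %/ n)).
    rewrite expf_neq0 ?alpha_neq0 //=; apply/eqP.
    by rewrite -exprM -exprD e /cls addnC -divn_eq dlogK.
rewrite /cyc_class; case: pickP => [k Hk | none].
  by congr Some; apply/val_inj; apply/eqP; rewrite -key.
by have := none (Ordinal (ltn_pmod (dlog alpha h) n0)); rewrite key eqxx.
Qed.

Lemma sum_eq1 p (a : 'F_p) : \sum_(t : 'F_p) ((t == a)%:R : algC) = 1.
Proof.
by rewrite (bigD1 a) //= eqxx big1 ?addr0 // => t /negbTE ->.
Qed.

Lemma sum_neq0 p : prime p -> \sum_(t : 'F_p) ((t != 0)%:R : algC) = (p.-1)%:R.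
Proof.
move=> pp.
transitivity (\sum_(t : 'F_p) (1 - ((t == 0)%:R : algC))).
  by apply: eq_bigr => t _; case: (t == 0); rewrite ?subrr ?subr0.
rewrite sumrB sum_eq1 sumr_const card_Fp //.
by rewrite -{1}(prednK (prime_gt0 pp)) -addn1 natrD addrK.
Qed.

Lemma count_c p n (alpha : 'F_p) (pp : prime p) (prim : (p.-1).-primitive_root alpha)
  (nd : (n %| p.-1)%N) (n0 : (0 < n)%N) :
  n%:R * \sum_(t : 'F_p) (((t != 0) && (cls n alpha t == 0%N))%:R : algC) = (p.-1)%:R.
Proof.
set c := \sum_(t : 'F_p) _.
have a0 := alpha_neq0 pp prim.
have Hk : forall k : 'I_n,
    \sum_(t : 'F_p) (((t != 0) && (cls n alpha t == k))%:R : algC) = c.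
  move=> k; rewrite (reindex_inj (mulfI (expf_neq0 k a0))) /=.
  apply: eq_bigr => t _.
  rewrite mulf_eq0 (negbTE (expf_neq0 k a0)) /=.
  case: (eqVneq t 0) => [->|nt] //=.
  rewrite cls_mul ?expf_neq0 // cls_exp // (modn_small (ltn_ord k)).
  have := eqn_modDl k (cls n alpha t) 0 n.
  rewrite addn0 (modn_small (ltn_ord k)) /cls modn_mod mod0n => -> //.
have Ht : forall t : 'F_p, ((t != 0)%:R : algC) =
    \sum_(k < n) (((t != 0) && (cls n alpha t == k))%:R : algC).
  move=> t; case: (eqVneq t 0) => [->|nt] /=; first by rewrite big1.
  rewrite (bigD1 (Ordinal (ltn_pmod (dlog alpha t) n0))) //= eqxx big1 ?addr0 //.
  move=> k nk; rewrite (_ : (cls n alpha t == k) = false) //.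
  apply/negbTE; apply: contra nk => /eqP e; apply/eqP/val_inj => /=.
  by rewrite -e.
rewrite -(sum_neq0 pp); under [RHS]eq_bigr do rewrite Ht.
rewrite exchange_big /=; under eq_bigr do rewrite Hk.
by rewrite sumr_const card_ord mulr_natl.
Qed.
Lemma corr_pair p (f g : pseq p) :
  \sum_s `|pcorr f g s| ^+ 2 = \sum_t pcorr f f t * (pcorr g g t)^*.
Proof.
rewrite /pcorr.
transitivity (\sum_(s : 'F_p) \sum_(j : 'F_p) \sum_(i : 'F_p)
   (f (j + s) * (g j)^*) * ((f (i + s))^* * g i)).
  apply: eq_bigr => s _; rewrite normCK big_distrl /=; apply: eq_bigr => j _.
  rewrite rmorph_sum big_distrr /=; apply: eq_bigr => i _.
  by rewrite rmorphM /= conjCK.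
transitivity (\sum_(i : 'F_p) \sum_(s : 'F_p) \sum_(j : 'F_p)
   (f (j + s) * (g j)^*) * ((f (i + s))^* * g i)).
  rewrite (eq_bigr _ (fun s _ => exchange_big _ _ _ _ _ _)) /=.
  by rewrite exchange_big.
transitivity (\sum_(b : 'F_p) \sum_(a : 'F_p) \sum_(t : 'F_p)
   (f (a + t) * (f a)^*) * ((g (b + t))^* * g b)).
  apply: eq_bigr => i _; rewrite (reindex_inj (addIr (- i))) /=.
  apply: eq_bigr => a _; rewrite (reindex_inj (addIr i)) /=.
  apply: eq_bigr => t _.
  have -> : t + i + (a - i) = a + t by ring.
  have -> : i + (a - i) = a by ring.
  rewrite [t + i]addrC; ring.
rewrite exchange_big /=.
transitivity (\sum_(a : 'F_p) \sum_(t : 'F_p) \sum_(b : 'F_p)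
   (f (a + t) * (f a)^*) * ((g (b + t))^* * g b)).
  by apply: eq_bigr => a _; rewrite exchange_big.
rewrite exchange_big /=; apply: eq_bigr => t _.
rewrite big_distrl /=; apply: eq_bigr => a _.
rewrite rmorph_sum big_distrr /=; apply: eq_bigr => b _.
by rewrite rmorphM /= conjCK.
Qed.

Lemma corr_sum p (F : seq (pseq p)) :
  \sum_(f <- F) \sum_(g <- F) \sum_s `|pcorr f g s| ^+ 2 =
  \sum_t `|\sum_(f <- F) pcorr f f t| ^+ 2.
Proof.
transitivity (\sum_t \sum_(f <- F) \sum_(g <- F) pcorr f f t * (pcorr g g t)^*).
  symmetry; rewrite exchange_big /=.
  apply: eq_bigr => f _; rewrite exchange_big /=.
  by apply: eq_bigr => g _; rewrite corr_pair.
apply: eq_bigr => t _; rewrite normCK big_distrl /=; apply: eq_bigr => f _.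
by rewrite rmorph_sum big_distrr.
Qed.
Lemma had_sum n (D : seq (pattern n)) : (0 < n)%N -> hadamard_plan D ->
  forall k l : 'I_n,
  \sum_(d <- D) d k * (d l)^* = (if k == l then n%:R else 0) - 1.
Proof.
case: n D => // n' D _ [uD sD uni ort] k l.
set x0 : pattern n'.+1 := [ffun=> 0].
pose M : 'M[algC]_n'.+1 := \matrix_(i, j) (if (i : nat) is i'.+1 then nth x0 D i' j else 1).
pose B := (map_mx Num.conj M)^T.
have nz : (n'.+1%:R : algC) != 0 by rewrite pnatr_eq0.
have MB : M *m (n'.+1%:R^-1 *: B) = 1%:M.
  rewrite -scalemxAr; apply/matrixP => i j; rewrite !mxE.
  under eq_bigr do rewrite !mxE.
  have -> : \sum_k (if (i : nat) is i'.+1 then nth x0 D i' k else 1) *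
     (if (j : nat) is i'.+1 then nth x0 D i' k else 1)^* = n'.+1%:R * (i == j)%:R.
    case: i j => [[|i] Hi] [[|j] Hj] /=.
    - under eq_bigr do rewrite /= conjC1 mulr1.
      by rewrite sumr_const card_ord mulr1.
    - under eq_bigr do rewrite /= mul1r.
      rewrite -rmorph_sum /=.
      have Dj : nth x0 D j \in D by rewrite mem_nth // sD.
      by have [_ ->] := uni _ Dj; rewrite conjC0 mulr0.
    - under eq_bigr do rewrite /= conjC1 mulr1.
      have Di : nth x0 D i \in D by rewrite mem_nth // sD.
      by have [_ ->] := uni _ Di; rewrite mulr0.
      have Di : nth x0 D i \in D by rewrite mem_nth // sD.
      have Dj : nth x0 D j \in D by rewrite mem_nth // sD.
      case: (eqVneq i j) => [eij|ij]; first subst j.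
        have -> : (Ordinal Hi == Ordinal Hj) = true by apply/eqP/val_inj => /=; congr _.+1.
        under eq_bigr do rewrite -normCK.
        have [un _] := uni _ Di.
        by under eq_bigr do rewrite un expr1n; rewrite sumr_const card_ord mulr1.
      have -> : (Ordinal Hi == Ordinal Hj) = false.
        by apply/negbTE; apply: contra ij => /eqP [->].
      rewrite mulr0; apply: ort => //.
      by rewrite nth_uniq // sD.
  by rewrite mulrA mulVf // mul1r.
have BM := mulmx1C MB.
have := congr1 (fun A : 'M_n'.+1 => A l k) BM.
rewrite -scalemxAl !mxE.
under eq_bigr do rewrite !mxE.
rewrite big_ord_recl /= conjC1 mul1r.
move=> H.
have H2 : \sum_(i < n') (nth x0 D i l)^* * nth x0 D i k = n'.+1%:R * (l == k)%:R - 1.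
  apply: (mulfI (invr_neq0 nz)); rewrite mulrBr mulrA mulVf // mul1r -H.
  rewrite -mulrBr; congr (_ * _); rewrite [1 + _]addrC addrK; apply: eq_bigr => i _.
  by [].
rewrite (big_nth x0) sD big_mkord.
under eq_bigr do rewrite mulrC.
rewrite H2 eq_sym.
by case: (k == l); rewrite ?mulr1 ?mulr0.
Qed.


Lemma seqE p n (alpha : 'F_p) (d : pattern n) h (pp : prime p)
  (prim : (p.-1).-primitive_root alpha) (nd : (n %| p.-1)%N) (n0 : (0 < n)%N) :
  seq_of_pattern alpha d h =
  if h == 0 then 0 else d (Ordinal (ltn_pmod (dlog alpha h) n0)).
Proof.
rewrite ffunE; case: eqP => // /eqP nh.
by rewrite (cyc_classE pp prim nd n0 nh).
Qed.

Lemma seq_inj p n (alpha : 'F_p) (pp : prime p)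
  (prim : (p.-1).-primitive_root alpha) (nd : (n %| p.-1)%N) (n0 : (0 < n)%N) :
  injective (@seq_of_pattern p n alpha).
Proof.
move=> d e de; apply/ffunP => k.
have := congr1 (fun f : pseq p => f (alpha ^+ k)) de.
have a0 : alpha ^+ k != 0 by rewrite expf_neq0 // alpha_neq0.
rewrite !(seqE _ _ pp prim nd n0) (negbTE a0).
have -> // : Ordinal (ltn_pmod (dlog alpha (alpha ^+ k)) n0) = k.
apply/val_inj => /=; have := @cls_exp p n alpha k pp prim nd.
by rewrite /cls => ->; rewrite modn_small.
Qed.

Lemma pcorr0 p n (alpha : 'F_p) (d : pattern n) (pp : prime p)
  (prim : (p.-1).-primitive_root alpha) (nd : (n %| p.-1)%N) (n0 : (0 < n)%N) :
  unimodular d -> pcorr (seq_of_pattern alpha d) (seq_of_pattern alpha d) 0 = (p.-1)%:R.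
Proof.
move=> ud; rewrite /pcorr -(sum_neq0 pp); apply: eq_bigr => j _.
rewrite addr0 (seqE _ _ pp prim nd n0); case: (j == 0) => /=.
  by rewrite mul0r.
by rewrite -normCK ud expr1n.
Qed.

Lemma S_formula p n (alpha : 'F_p) (D : seq (pattern n)) (pp : prime p)
  (prim : (p.-1).-primitive_root alpha) (nd : (n %| p.-1)%N) (n0 : (0 < n)%N)
  (hp : hadamard_plan D) (s : 'F_p) :
  \sum_(d <- D) pcorr (seq_of_pattern alpha d) (seq_of_pattern alpha d) s =
  \sum_(j : 'F_p) (((j != 0) && (j + s != 0))%:R *
      (n%:R * (cls n alpha (j + s) == cls n alpha j)%:R - 1)).
Proof.
rewrite /pcorr exchange_big /=; apply: eq_bigr => j _.
under eq_bigr do rewrite !(seqE _ _ pp prim nd n0).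
case: (eqVneq j 0) => [_|nj] /=.
  by rewrite mul0r big1 // => d _; rewrite conjC0 mulr0.
case: (eqVneq (j + s) 0) => [_|njs] /=.
  by rewrite mul0r big1 // => d _; rewrite mul0r.
rewrite mul1r (had_sum n0 hp); congr (_ - _).
rewrite -val_eqE /=.
by case: (_ == _); rewrite ?mulr1 ?mulr0.
Qed.

Lemma S_val p n (alpha : 'F_p) (D : seq (pattern n)) (pp : prime p)
  (prim : (p.-1).-primitive_root alpha) (nd : (n %| p.-1)%N) (n0 : (0 < n)%N)
  (hp : hadamard_plan D) (s : 'F_p) :
  \sum_(d <- D) pcorr (seq_of_pattern alpha d) (seq_of_pattern alpha d) s =
  if s == 0 then ((n - 1) * (p - 1))%N%:R else 1 - n%:R.
Proof.
rewrite (@S_formula p n alpha D pp prim nd n0 hp s).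
case: (eqVneq s 0) => [->|ns].
  transitivity (\sum_(j : 'F_p) ((j != 0)%:R * (n%:R - 1) : algC)).
    by apply: eq_bigr => j _; rewrite addr0 eqxx mulr1 andbb.
  rewrite -big_distrl /= sum_neq0 // natrM !subn1 [RHS]mulrC; congr (_ * _).
  by rewrite -[X in X%:R - 1](prednK n0) -addn1 natrD addrK.
have a0 := alpha_neq0 pp prim.
set c := \sum_(t : 'F_p) (((t != 0) && (cls n alpha t == 0%N))%:R : algC).
have hc := @count_c p n alpha pp prim nd n0.
set B := \sum_(j : 'F_p) ((((j != 0) && (j + s != 0)) &&
            (cls n alpha (j + s) == cls n alpha j))%:R : algC).
set A := \sum_(j : 'F_p) ((((j != 0) && (j + s != 0)))%:R : algC).
transitivity (n%:R * B - A).
  rewrite /A /B mulr_sumr -sumrB; apply: eq_bigr => j _.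
  by case: (_ && _); case: (_ == _) => /=; ring.
have HA : A = (p.-1)%:R - 1.
  transitivity (\sum_(j : 'F_p) ((j != 0)%:R - (j == - s)%:R : algC)); last first.
    by rewrite sumrB sum_neq0 // sum_eq1.
  rewrite /A; apply: eq_bigr => j _.
  case: (eqVneq j 0) => [->|nj].
    by rewrite /= (_ : (0 == - s) = false) ?subrr // eq_sym oppr_eq0 (negbTE ns).
  by rewrite addr_eq0 /=; case: (j == - s); rewrite /= ?subrr ?subr0.
have c1 : cls n alpha 1 = 0%N by rewrite -(expr0 alpha) cls_exp // mod0n.
have HB : c = 1 + B.
  pose sg := fun j : 'F_p => if j == 0 then 1 else 1 + s / j.
  have sg_inj : injective sg.
    move=> x y; rewrite /sg.
    case: (eqVneq x 0) => [->|nx]; case: (eqVneq y 0) => [->|ny] //.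
    - move/eqP; rewrite -subr_eq0 opprD addNKr oppr_eq0 mulf_eq0 invr_eq0.
      by rewrite (negbTE ns) (negbTE ny).
    - move/eqP; rewrite -subr_eq0 addrAC subrr add0r mulf_eq0 invr_eq0.
      by rewrite (negbTE ns) (negbTE nx).
    move/addrI/(mulfI ns)/invr_inj => //.
  rewrite /c (reindex_inj sg_inj).
  transitivity (\sum_(j : 'F_p) ((j == 0)%:R + ((((j != 0) && (j + s != 0)) &&
            (cls n alpha (j + s) == cls n alpha j))%:R : algC))); last first.
    by rewrite big_split /= sum_eq1.
  apply: eq_bigr => j _; rewrite /sg.
  case: (eqVneq j 0) => [->|nj] /=.
    by rewrite c1 eqxx addr0.
  have e : 1 + s / j = (j + s) / j by rewrite mulrDl divff.
  rewrite add0r e mulf_eq0 invr_eq0 (negbTE nj) orbF.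
  case: (eqVneq (j + s) 0) => [//|njs] /=.
  have -> : cls n alpha (j + s) = ((cls n alpha ((j + s) / j) + cls n alpha j) %% n)%N.
    by rewrite -cls_mul ?divfK // mulf_neq0 ?invr_eq0.
  have := eqn_modDr (cls n alpha j) (cls n alpha ((j + s) / j)) 0 n.
  rewrite add0n /cls !modn_mod => ->.
  by rewrite mod0n.
rewrite HA.
have -> : B = c - 1 by rewrite HB [1 + B]addrC addrK.
by rewrite mulrBr hc; ring.
Qed.

Unset Implicit Arguments.

Theorem mainTheorem9 (n p : nat) (D : seq (pattern n)) (alpha : 'F_p) :
  (1 < n)%N -> hadamard_plan D -> prime p -> p = 1 %[mod n] ->
  (p.-1).-primitive_root alpha ->
  let F := codebook alpha D in
  let S := fun s : 'F_p => \sum_(f <- F) pcorr f f s in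
  [/\ (forall s : 'F_p,
         S s = if s == 0 then ((n - 1) * (p - 1))%N%:R else 1 - n%:R),
      \sum_(s : 'F_p | s != 0) `|S s| ^+ 2 = ((p - 1) * (n - 1) ^ 2)%N%:R,
      \sum_(s : 'F_p) `|S s| ^+ 2 = (p * (p - 1) * (n - 1) ^ 2)%N%:R
    & PCDF F = p%:R / (p - 1)%N%:R].
Proof.
move=> n1 hp pp pmod prim F S.
have n0 : (0 < n)%N by apply: ltnW.
have nd : (n %| p.-1)%N.
  by rewrite -subn1 -eqn_mod_dvd ?prime_gt0 //; apply/eqP.
have hp' := hp; case: hp' => [uD sD uni ort].
have FE : F = [seq seq_of_pattern alpha d | d <- D].
  rewrite /F /codebook undup_id // map_inj_in_uniq //.
  by move=> d e _ _; apply: (seq_inj pp prim nd n0).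
have SE : forall s, S s = if s == 0 then ((n - 1) * (p - 1))%N%:R else 1 - n%:R.
  by move=> s; rewrite /S FE big_map (@S_val p n alpha D pp prim nd n0 hp s).
have nz : forall s : 'F_p, s != 0 -> `|S s| ^+ 2 = ((n - 1) ^ 2)%N%:R.
  move=> s ns; rewrite SE (negbTE ns) -opprB normrN.
  have -> : n%:R - 1 = (n - 1)%N%:R :> algC by rewrite natrB.
  by rewrite normr_nat natrX.
have P2 : \sum_(s : 'F_p | s != 0) `|S s| ^+ 2 = ((p - 1) * (n - 1) ^ 2)%N%:R.
  rewrite big_mkcond /=.
  transitivity (\sum_(s : 'F_p) ((s != 0)%:R * ((n - 1) ^ 2)%N%:R : algC)).
    apply: eq_bigr => s _; case: (eqVneq s 0) => [_|ns] /=; first by rewrite mul0r.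
    by rewrite mul1r nz.
  by rewrite -big_distrl /= sum_neq0 // natrM !subn1.
have P3 : \sum_(s : 'F_p) `|S s| ^+ 2 = (p * (p - 1) * (n - 1) ^ 2)%N%:R.
  rewrite (bigD1 0) //= P2 SE eqxx normr_nat -natrX -natrD.
  congr (_%:R); have hp1 := prime_gt0 pp.
  move: (n - 1)%N => a; rewrite -[p in (p * _ * _)%N](@subnK 1 p) //.
  move: (p - 1)%N => b; ring.
split => //.
have H0 : forall f, f \in F -> pcorr f f 0 = (p.-1)%:R.
  move=> f; rewrite FE => /mapP [d dD ->].
  by have [ud _] := uni d dD; apply: pcorr0.
rewrite /PCDF.
transitivity ((size F)%:R ^- 2 * (\sum_(f <- F) \sum_(g <- F)
    (\sum_s `|pcorr f g s| ^+ 2)) / ((p.-1)%:R * (p.-1)%:R)).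
  rewrite -mulrA; congr (_ * _); rewrite big_distrl /=.
  apply: eq_big_seq => f Hf; rewrite big_distrl /=.
  by apply: eq_big_seq => g Hg; rewrite /PCDF2 !H0.
rewrite corr_sum -/S P3 FE size_map sD -subn1.
have np : ((p - 1)%N%:R : algC) != 0.
  by rewrite pnatr_eq0 subn_eq0 -ltnNge prime_gt1.
have nn : ((n - 1)%N%:R : algC) != 0.
  by rewrite pnatr_eq0 subn_eq0 -ltnNge.
rewrite -!subn1 !natrM; field.
by rewrite np nn.
Qed.
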